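(* Let $S$ be a compact, metrizable, separable space and let $A$ be the generator of a Feller semigroup on $C(S)$ with resolvent $R_\lambda=(\lambda-A)^{-1}$, $\lambda>0$. Suppose $A$ is not conservative, i.e. $\lambda R_\lambda 1_S\neq 1_S$ for some $\lambda>0$. Then there exists at least one Laplace transform of an exit law for $A$.
   Context: A Feller semigroup is a strongly continuous semigroup of positive contractions on $C(S)$ (real continuous functions, sup norm) with $T(0)=I$, not necessarily conservative; it is conservative iff $\lambda R_\lambda1_S=1_S$ for all $\lambda>0$. A family $\ell_\lambda$, $\lambda>0$, is the Laplace transform of an exit law for $A$ if: (a) $(0,\infty)\ni\lambda\mapsto\ell_\lambda\in C(S)$ is locally bounded, non-negative and $\ell_\lambda\neq0$ for at least one $\lambda$; (b) $\lim_{\lambda\to0+}\ell_\lambda(x)\le1$ for each $x\in S$; (c) $(\lambda-\mu)R_\lambda\ell_\mu=\ell_\mu-\ell_\lambda$ for all $\lambda,\mu>0$. *)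

(* Defs.v *)
From HB Require Import structures.
From mathcomp Require Import all_boot all_order all_algebra.
From mathcomp Require Import all_classical all_reals all_analysis.
Set Implicit Arguments. Unset Strict Implicit. Unset Printing Implicit Defensive.
Import Order.TTheory GRing.Theory Num.Theory.
Import numFieldNormedType.Exports.
Local Open Scope classical_set_scope.
Local Open Scope ring_scope.

(* Real-valued functions on S; C(S) = those that are continuous. *)

Definition supn {R : realType} {S : topologicalType} (f : S -> R) : R :=
  sup [set `|f x| | x in [set: S]].

Definition separable_space (S : topologicalType) : Prop :=
  exists D : set S, countable D /\ dense D.

Definition feller_semigroup {R : realType} {S : topologicalType}
  (T : R -> (S -> R) -> (S -> R)) : Prop :=
  (forall t (f : S -> R), 0 <= t -> continuous f -> continuous (T t f)) /\
      (forall t (a : R) (f g : S -> R), 0 <= t -> continuous f -> continuous g ->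
          T t (fun x => a * f x + g x) = (fun x => a * T t f x + T t g x)) /\
      (forall t (f : S -> R), 0 <= t -> continuous f -> (forall x, 0 <= f x) ->
          forall x, 0 <= T t f x) /\
      (forall t (f : S -> R), 0 <= t -> continuous f -> supn (T t f) <= supn f) /\
      (forall f : S -> R, continuous f -> T 0 f = f) /\
      (forall s t (f : S -> R), 0 <= s -> 0 <= t -> continuous f ->
          T (s + t) f = T s (T t f)) /\
      (forall f : S -> R, continuous f ->
          (fun t => supn (fun x => T t f x - f x)) @ 0^'+ --> 0).

Definition is_generator {R : realType} {S : topologicalType}
  (T : R -> (S -> R) -> (S -> R)) (D : set (S -> R))
  (A : (S -> R) -> (S -> R)) : Prop :=
  (forall f, D f <-> (continuous f /\ exists g : S -> R, continuous g /\
      (fun t => supn (fun x => (T t f x - f x) / t - g x)) @ 0^'+ --> 0)) /\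
  (forall f, D f -> continuous (A f) /\
      (fun t => supn (fun x => (T t f x - f x) / t - A f x)) @ 0^'+ --> 0).

Definition is_resolvent {R : realType} {S : topologicalType}
  (D : set (S -> R)) (A : (S -> R) -> (S -> R))
  (Res : R -> (S -> R) -> (S -> R)) : Prop :=
  forall l, 0 < l ->
    (forall g, continuous g ->
       D (Res l g) /\ (fun x => l * Res l g x - A (Res l g) x) = g) /\
    (forall f, D f -> Res l (fun x => l * f x - A f x) = f).

Definition exit_law_LT {R : realType} {S : topologicalType}
  (Res : R -> (S -> R) -> (S -> R)) (ell : R -> S -> R) : Prop :=
  (forall l, 0 < l -> continuous (ell l)) /\
      (forall a b, 0 < a -> a <= b -> exists M : R,
          forall l x, a <= l <= b -> `|ell l x| <= M) /\
      (forall l x, 0 < l -> 0 <= ell l x) /\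
      (exists l, 0 < l /\ ell l <> (fun _ => 0)) /\
      (forall x, cvg ((fun l => ell l x) @ 0^'+) /\
                 lim ((fun l => ell l x) @ 0^'+) <= 1) /\
      (forall l m, 0 < l -> 0 < m ->
          (fun x => (l - m) * Res l (ell m) x) = (fun x => ell m x - ell l x)).

(* Main.v *)
Require Import Defs.
From HB Require Import structures.
From mathcomp Require Import all_boot all_order all_algebra.
From mathcomp Require Import all_classical all_reals all_analysis.
From mathcomp Require Import ring lra.
Import Order.TTheory GRing.Theory Num.Theory.
Import numFieldNormedType.Exports.
Local Open Scope classical_set_scope.
Local Open Scope ring_scope.
Set Implicit Arguments. Unset Strict Implicit.

Lemma supn_ub (R : realType) (S : topologicalType) (f : S -> R) :
  compact [set: S] -> continuous f -> forall x, `|f x| <= supn f.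
Proof.
move=> cS cf x.
have hs : has_sup [set `|f y| | y in [set: S]].
  apply: compact_has_sup; first by exists `|f x|, x.
  apply: (@continuous_compact _ _ (fun y => `|f y|)) => //.
  apply: continuous_subspaceT => y.
  exact: (continuous_comp (cf y) (@norm_continuous _ R^o _)).
by apply: sup_upper_bound => //; exists x.
Qed.

Lemma supn_le (R : realType) (S : topologicalType) (f : S -> R) (M : R) (x0 : S) :
  (forall x, `|f x| <= M) -> supn f <= M.
Proof.
move=> hM; apply: ge_sup; first by exists `|f x0|, x0.
by move=> _ [y _ <-].
Qed.

Lemma sup_pt (R : realType) (S : topologicalType) (F : R -> S -> R) :
  compact [set: S] ->
  (\forall t \near 0^'+, continuous (F t)) ->
  (fun t => supn (F t)) @ 0^'+ --> 0 ->
  forall x, (fun t => F t x) @ 0^'+ --> 0.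
Proof.
move=> cS hc hs x; apply/cvgr0Pnorm_le => e e0.
have h2 := cvgr0_norm_le _ hs _ e0.
near=> t.
have ct : continuous (F t) by near: t.
have h : `|supn (F t)| <= e by near: t; apply: h2.
have h1 := @supn_ub _ _ _ cS ct x. have h3 := ler_norm (supn (F t)). apply: (le_trans h1). apply: (le_trans h3). exact: h.
Unshelve. all: by end_near.
Qed.

Lemma T_zero (R : realType) (S : topologicalType) (T : R -> (S -> R) -> (S -> R)) (t : R) :
  feller_semigroup T -> 0 <= t -> T t (fun _ => 0) = (fun _ => 0).
Proof.
move=> [_ [lin _]] t0.
have := lin t 1 (fun _ => 0) (fun _ => 0) t0 (@cst_continuous _ _ _) (@cst_continuous _ _ _).
have -> : (fun x : S => 1 * (0:R) + 0) = fun _ => 0 by apply: funext => x; rewrite mul1r addr0.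
move=> H; apply: funext => x.
have := congr1 (fun h => h x) H => /= H2.
lra.
Qed.

Lemma T_scale (R : realType) (S : topologicalType) (T : R -> (S -> R) -> (S -> R)) (t a : R) (f : S -> R) :
  feller_semigroup T -> 0 <= t -> continuous f ->
  T t (fun x => a * f x) = (fun x => a * T t f x).
Proof.
move=> hT t0 cf; have [_ [lin _]] := hT.
have := lin t a f (fun _ => 0) t0 cf (@cst_continuous _ _ _).
have -> : (fun x : S => a * f x + 0) = fun x => a * f x by apply: funext => x; rewrite addr0.
rewrite T_zero // => ->; apply: funext => x; by rewrite addr0.
Qed.

Lemma T_one_le (R : realType) (S : topologicalType) (T : R -> (S -> R) -> (S -> R)) (t : R) (x : S) :
  compact [set: S] -> feller_semigroup T -> 0 <= t -> T t (fun _ => 1) x <= 1.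
Proof.
move=> cS hT t0; have [cT [_ [_ [con _]]]] := hT.
have c1 : continuous (fun _ : S => (1:R)) by apply: cst_continuous.
have h1 := @supn_ub _ _ _ cS (cT t _ t0 c1) x.
have h2 := con t _ t0 c1.
have h3 : supn (fun _ : S => (1:R)) <= 1 by apply: (@supn_le _ _ _ _ x) => y; rewrite normr1.
have h4 := ler_norm (T t (fun _ => 1) x).
lra.
Qed.

Lemma T_le_max (R : realType) (S : topologicalType) (T : R -> (S -> R) -> (S -> R)) (t : R) (f : S -> R) (x1 : S) :
  compact [set: S] -> feller_semigroup T -> 0 <= t -> continuous f ->
  (forall y, f y <= f x1) -> 0 <= f x1 -> T t f x1 <= f x1.
Proof.
move=> cS hT t0 cf hmax hpos; have [cT [lin [pos _]]] := hT.
have cc : continuous (fun _ : S => f x1) by apply: cst_continuous.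
have H := lin t (-1) f (fun _ => f x1) t0 cf cc.
have cg : continuous (fun x => -1 * f x + f x1).
  by move=> x; apply: cvgD; [apply: cvgMl_tmp; exact: cf|exact: cvg_cst].
have gpos : forall x, 0 <= -1 * f x + f x1 by move=> x; have := hmax x; lra.
have := pos t _ t0 cg gpos x1; rewrite H /=.
have -> : (fun _ : S => f x1) = fun x => f x1 * (fun _ => 1) x by apply: funext => x; rewrite mulr1.
rewrite T_scale //; last exact: cst_continuous.
have := @T_one_le _ _ T t x1 cS hT t0.
nra.
Qed.

Lemma conv_pt (R : realType) (S : topologicalType) (T : R -> (S -> R) -> (S -> R))
  (f g : S -> R) :
  compact [set: S] -> feller_semigroup T -> continuous f -> continuous g ->
  (fun t => supn (fun x => (T t f x - f x) / t - g x)) @ 0^'+ --> 0 ->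
  forall x, (fun t => (T t f x - f x) / t) @ 0^'+ --> g x.
Proof.
move=> cS hT cf cg hs x; have [cT _] := hT.
have := @sup_pt _ _ (fun t x => (T t f x - f x) / t - g x) cS _ hs x.
have E : (fun t => (T t f x - f x) / t) = fun t => ((T t f x - f x) / t - g x) + g x.
  by apply: funext => t; rewrite subrK.
move=> H; rewrite E.
have H' : (T t f x - f x) / t - g x @[t --> 0^'+] --> 0.
  apply: H; near=> t => y.
  apply: cvgB; last exact: cg.
  apply: cvgMr_tmp; apply: cvgB; last exact: cf.
  apply: cT => //.
have := cvgD H' (cvg_cst (g x)); rewrite add0r => HH. exact: HH.
Unshelve. all: by end_near.
Qed.

Lemma D_cont (R : realType) (S : topologicalType) (T : R -> (S -> R) -> (S -> R))
  (D : set (S -> R)) (A : (S -> R) -> (S -> R)) f :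
  is_generator T D A -> D f -> continuous f.
Proof. by move=> [h1 _] /h1 []. Qed.

Lemma gen_pt (R : realType) (S : topologicalType) (T : R -> (S -> R) -> (S -> R))
  (D : set (S -> R)) (A : (S -> R) -> (S -> R)) f :
  compact [set: S] -> feller_semigroup T -> is_generator T D A -> D f ->
  forall x, (fun t => (T t f x - f x) / t) @ 0^'+ --> A f x.
Proof.
move=> cS hT hG Df; have [cA hs] := hG.2 f Df.
exact: conv_pt cS hT (D_cont hG Df) cA hs.
Qed.

Lemma A_eq (R : realType) (S : topologicalType) (T : R -> (S -> R) -> (S -> R))
  (D : set (S -> R)) (A : (S -> R) -> (S -> R)) f g :
  compact [set: S] -> feller_semigroup T -> is_generator T D A -> D f -> continuous g ->
  (fun t => supn (fun x => (T t f x - f x) / t - g x)) @ 0^'+ --> 0 ->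
  A f = g.
Proof.
move=> cS hT hG Df cg hs; apply: funext => x.
rewrite -(cvg_lim _ (@gen_pt _ _ _ _ _ _ cS hT hG Df x)) //.
by rewrite -(cvg_lim _ (@conv_pt _ _ _ _ _ cS hT (D_cont hG Df) cg hs x)).
Qed.

Lemma D_lin (R : realType) (S : topologicalType) (T : R -> (S -> R) -> (S -> R))
  (D : set (S -> R)) (A : (S -> R) -> (S -> R)) (f g : S -> R) (a b : R) (x0 : S) :
  compact [set: S] -> feller_semigroup T -> is_generator T D A -> D f -> D g ->
  D (fun x => a * f x + b * g x) /\
  A (fun x => a * f x + b * g x) = (fun x => a * A f x + b * A g x).
Proof.
move=> cS hT hG Df Dg.
have [cT [lin _]] := hT.
have cf := D_cont hG Df; have cg := D_cont hG Dg.
have [cAf hf] := hG.2 f Df; have [cAg hg] := hG.2 g Dg.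
have ch : continuous (fun x => a * f x + b * g x).
  by move=> x; apply: cvgD; apply: cvgMl_tmp; [exact: cf|exact: cg].
have cG : continuous (fun x => a * A f x + b * A g x).
  by move=> x; apply: cvgD; apply: cvgMl_tmp; [exact: cAf|exact: cAg].
set Ff := fun t x => (T t f x - f x) / t - A f x.
set Fg := fun t x => (T t g x - g x) / t - A g x.
have cF : forall t, 0 < t -> continuous (Ff t) /\ continuous (Fg t).
  move=> t t0; split => y; (apply: cvgB; [apply: cvgMr_tmp; apply: cvgB|]);
    by [apply: cT => //; exact: ltW| exact: cf | exact: cg | exact: cAf | exact: cAg].
have hs : (fun t => supn (fun x => (T t (fun x => a * f x + b * g x) x
              - (a * f x + b * g x)) / t - (a * A f x + b * A g x))) @ 0^'+ --> 0.
  apply: (@squeeze_cvgr _ _ _ _ (fun _ => 0) (fun t => `|a| * supn (Ff t) + `|b| * supn (Fg t))).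
  - near=> t.
    have t0 : 0 < t by near: t; exact: nbhs_right_gt.
    have [cFf cFg] := cF t t0.
    have EE : (fun x => (T t (fun x => a * f x + b * g x) x
              - (a * f x + b * g x)) / t - (a * A f x + b * A g x)) =
              fun x => a * Ff t x + b * Fg t x.
      rewrite lin //; last first.
        by move=> x; apply: cvgMl_tmp; exact: cg.
      rewrite T_scale //.
      apply: funext => x; rewrite /Ff /Fg.
      have tn0 : t != 0 by rewrite gt_eqF.
      field; exact: tn0.
    rewrite EE; apply/andP; split.
      have := supn_ub cS (_ : continuous (fun x => a * Ff t x + b * Fg t x)) x0.
      move=> /(_ _) H; apply: le_trans (H _); first exact: normr_ge0.
      by move=> x; apply: cvgD; apply: cvgMl_tmp; [exact: cFf|exact: cFg].
    apply: (@supn_le _ _ _ _ x0) => x.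
    apply: le_trans (ler_normD _ _) _; rewrite !normrM.
    apply: lerD; apply: ler_wpM2l => //; exact: supn_ub.
  - exact: cvg_cst.
  - have := cvgD (@cvgMl_tmp _ _ _ _ _ `|a| _ hf) (@cvgMl_tmp _ _ _ _ _ `|b| _ hg).
    rewrite !mulr0 addr0 => HH; exact: HH.
have Dh : D (fun x => a * f x + b * g x).
  by apply/(hG.1 _); split => //; exists (fun x => a * A f x + b * A g x).
split => //.
exact: A_eq cS hT hG Dh cG hs.
Unshelve. all: by end_near.
Qed.

Lemma A_max (R : realType) (S : topologicalType) (T : R -> (S -> R) -> (S -> R))
  (D : set (S -> R)) (A : (S -> R) -> (S -> R)) (f : S -> R) (x1 : S) :
  compact [set: S] -> feller_semigroup T -> is_generator T D A -> D f ->
  (forall y, f y <= f x1) -> 0 <= f x1 -> A f x1 <= 0.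
Proof.
move=> cS hT hG Df hmax hpos.
have H := @gen_pt _ _ _ _ _ _ cS hT hG Df x1.
rewrite -(cvg_lim _ H) //; apply: limr_le; first by apply/cvg_ex; eexists; exact: H.
near=> t.
have t0 : 0 < t by near: t; exact: nbhs_right_gt.
have := @T_le_max _ _ T t f x1 cS hT (ltW t0) (D_cont hG Df) hmax hpos.
move=> h; apply: mulr_le0_ge0; first by lra.
by rewrite invr_ge0; exact: ltW.
Unshelve. all: by end_near.
Qed.

Lemma A_min (R : realType) (S : topologicalType) (T : R -> (S -> R) -> (S -> R))
  (D : set (S -> R)) (A : (S -> R) -> (S -> R)) (f : S -> R) (x1 : S) :
  compact [set: S] -> feller_semigroup T -> is_generator T D A -> D f ->
  (forall y, f x1 <= f y) -> f x1 <= 0 -> 0 <= A f x1.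
Proof.
move=> cS hT hG Df hmin hneg.
have [Dh Ah] := @D_lin _ _ _ _ _ f f (-1) 0 x1 cS hT hG Df Df.
have := @A_max _ _ _ _ _ _ x1 cS hT hG Dh.
rewrite Ah /= => H.
have : -1 * A f x1 + 0 * A f x1 <= 0.
  apply: H; last by lra.
  by move=> y; have := hmin y; lra.
lra.
Qed.

Lemma Res_pos (R : realType) (S : topologicalType) (T : R -> (S -> R) -> (S -> R))
  (D : set (S -> R)) (A : (S -> R) -> (S -> R)) (Res : R -> (S -> R) -> (S -> R))
  (l : R) (g : S -> R) :
  compact [set: S] -> feller_semigroup T -> is_generator T D A -> is_resolvent D A Res ->
  0 < l -> continuous g -> (forall x, 0 <= g x) -> forall x, 0 <= Res l g x.
Proof.
move=> cS hT hG hR l0 cg gpos x.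
have [DRg Eg] := (hR l l0).1 g cg.
have cf := D_cont hG DRg.
have [c _ cmin] := @compact_EVT_min _ _ (Res l g) [set: S] (ex_intro _ x I) cS
  (continuous_subspaceT cf).
have cmin' : forall y, Res l g c <= Res l g y by move=> y; apply: cmin; rewrite inE.
suff : 0 <= Res l g c by move=> h; apply: le_trans h (cmin' x).
have [//|fc0] := leP 0 (Res l g c).
have := @A_min _ _ _ _ _ _ c cS hT hG DRg cmin' (ltW fc0).
have := congr1 (fun h => h c) Eg => /= E.
have := gpos c.
nra.
Qed.

Lemma lRes1_le (R : realType) (S : topologicalType) (T : R -> (S -> R) -> (S -> R))
  (D : set (S -> R)) (A : (S -> R) -> (S -> R)) (Res : R -> (S -> R) -> (S -> R))
  (l : R) :
  compact [set: S] -> feller_semigroup T -> is_generator T D A -> is_resolvent D A Res ->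
  0 < l -> forall x, l * Res l (fun _ => 1) x <= 1.
Proof.
move=> cS hT hG hR l0 x.
have c1 : continuous (fun _ : S => (1:R)) by apply: cst_continuous.
have [DRg Eg] := (hR l l0).1 _ c1.
have cf := D_cont hG DRg.
have [c _ cmax] := @compact_EVT_max _ _ (Res l (fun _ => 1)) [set: S] (ex_intro _ x I) cS
  (continuous_subspaceT cf).
have cmax' : forall y, Res l (fun _ => 1) y <= Res l (fun _ => 1) c
  by move=> y; apply: cmax; rewrite inE.
have p := @Res_pos _ _ _ _ _ _ l _ cS hT hG hR l0 c1 (fun _ => ler01) c.
have := @A_max _ _ _ _ _ _ c cS hT hG DRg cmax' p.
have := congr1 (fun h => h c) Eg => /= E.
have := cmax' x.
nra.
Qed.

Definition ellf (R : realType) (S : topologicalType) (Res : R -> (S -> R) -> (S -> R))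
  (k : R) (x : S) : R := 1 - k * Res k (fun _ => 1) x.

Lemma res_id (R : realType) (S : topologicalType) (T : R -> (S -> R) -> (S -> R))
  (D : set (S -> R)) (A : (S -> R) -> (S -> R)) (Res : R -> (S -> R) -> (S -> R))
  (l m : R) (x0 : S) :
  compact [set: S] -> feller_semigroup T -> is_generator T D A -> is_resolvent D A Res ->
  0 < l -> 0 < m ->
  (fun x => (l - m) * Res l (ellf Res m) x) = (fun x => ellf Res m x - ellf Res l x).
Proof.
move=> cS hT hG hR l0 m0.
have [<-|lm] := eqVneq m l.
  by apply: funext => x; rewrite !subrr mul0r.
have lm' : l - m != 0 by rewrite subr_eq0 eq_sym.
have c1 : continuous (fun _ : S => (1:R)) by apply: cst_continuous.
have [Dv Ev] := (hR l l0).1 _ c1.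
have [Du Eu] := (hR m m0).1 _ c1.
set v := Res l (fun _ => 1) in Dv Ev *.
set u := Res m (fun _ => 1) in Du Eu *.
have [Dw Aw] := @D_lin _ _ _ _ _ v u (l / (l - m)) (- (m / (l - m))) x0 cS hT hG Dv Du.
set w := (fun x => l / (l - m) * v x + - (m / (l - m)) * u x) in Dw Aw.
have Hell : ellf Res m = fun x => l * w x - A w x.
  apply: funext => x; rewrite Aw /ellf -/u /w.
  have Av : A v x = l * v x - 1 by have := congr1 (fun h => h x) Ev => /=; lra.
  have Au : A u x = m * u x - 1 by have := congr1 (fun h => h x) Eu => /=; lra.
  rewrite Av Au; field; exact: lm'.
have Rw : Res l (ellf Res m) = w by rewrite Hell; exact: (hR l l0).2 w Dw.
apply: funext => x; rewrite Rw /ellf -/u -/v /w.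
field; exact: lm'.
Qed.

Theorem theorem4 (R : realType) (S : pseudoMetricType R)
  (T : R -> (S -> R) -> (S -> R)) (D : set (S -> R))
  (A : (S -> R) -> (S -> R)) (Res : R -> (S -> R) -> (S -> R)) :
  hausdorff_space S -> compact [set: S] -> separable_space S ->
  feller_semigroup T -> is_generator T D A -> is_resolvent D A Res ->
  (exists l, 0 < l /\ (fun x => l * Res l (fun _ => 1) x) <> (fun _ => 1)) ->
  exists ell : R -> S -> R, exit_law_LT Res ell.
Proof.
move=> _ cS _ hT hG hR [l1 [l10 hne]].
have [x0 _] : exists x : S, True.
  apply: contrapT => nS; apply: hne; apply: funext => x; exfalso; apply: nS; by exists x.
have c1 : continuous (fun _ : S => (1:R)) by apply: cst_continuous.
have ell_le1 : forall l x, 0 < l -> ellf Res l x <= 1.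
  move=> l x l0; rewrite /ellf.
  have := @Res_pos _ _ _ _ _ _ l _ cS hT hG hR l0 c1 (fun _ => ler01) x.
  move=> h; have := mulr_ge0 (ltW l0) h; lra.
have ell_ge0 : forall l x, 0 < l -> 0 <= ellf Res l x.
  move=> l x l0; rewrite /ellf.
  have := @lRes1_le _ _ _ _ _ _ l cS hT hG hR l0 x; lra.
have ell_cont : forall l, 0 < l -> continuous (ellf Res l).
  move=> l l0 x; rewrite /ellf.
  have [Dv _] := (hR l l0).1 _ c1.
  apply: cvgB; first exact: cvg_cst.
  apply: cvgMl_tmp; exact: (D_cont hG Dv).
exists (ellf Res); split; first exact: ell_cont.
split.
  move=> a b a0 ab; exists 1 => l x /andP[al lb].
  have l0 : 0 < l by apply: lt_le_trans a0 al.
  have := ell_le1 l x l0; have := ell_ge0 l x l0.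
  move=> h1 h2; rewrite ger0_norm //.
split; first by move=> l x l0; exact: ell_ge0.
split.
  exists l1; split => // H; apply: hne; apply: funext => x.
  have := congr1 (fun h => h x) H; rewrite /ellf /=; lra.
split; last first.
  move=> l m l0 m0; exact: (@res_id _ _ _ _ _ _ l m x0 cS hT hG hR l0 m0).
move=> x.
have hc : cvg ((fun l => ellf Res l x) @ 0^'+).
  apply: nonincreasing_at_right_is_cvgr.
    near=> b => p q; rewrite !in_itv /= => /andP[p0 _] /andP[q0 _] pq.
    have := congr1 (fun h => h x) (@res_id _ _ _ _ _ _ q p x0 cS hT hG hR q0 p0) => /= E.
    have := @Res_pos _ _ _ _ _ _ q _ cS hT hG hR q0 (ell_cont p p0) (fun y => ell_ge0 p y p0) x.
    move=> h; have := mulr_ge0 (_ : 0 <= q - p) h.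
    rewrite E; move=> /(_ _) H.
    have : 0 <= ellf Res p x - ellf Res q x by apply: H; lra.
    lra.
  near=> b; exists 1 => _ [y /= yin <-].
  move: yin; rewrite in_itv /= => /andP[y0 _]; exact: ell_le1.
split => //.
apply: limr_le => //.
near=> t; apply: ell_le1; near: t; exact: nbhs_right_gt.
Unshelve. all: by end_near.
Qed.
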